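(* Let $X$ and $Y$ be disjoint (finite or infinite) sets of cardinality at least two, let $M\le\mathrm{Sym}(X)$ and $N\le\mathrm{Sym}(Y)$ be permutation groups, let $T$ be the $(|X|,|Y|)$-biregular tree, and let $c$ be a legal colouring of $X$ and $Y$. Then $U_c(M,N)$ satisfies Tits' independence property (P).
   Context: $T$ has natural bipartition $VT=V_X\sqcup V_Y$ (vertices in $V_X$ have valency $|X|$, in $V_Y$ valency $|Y|$). $A(v)$, $\overline{A}(v)$ are the sets of arcs (ordered pairs of adjacent vertices) with origin, resp. terminus, $v$. A legal colouring is a map $c:AT\to X\cup Y$ restricting to a bijection $A(v)\to X$ for $v\in V_X$, to a bijection $A(v)\to Y$ for $v\in V_Y$, and constant on each $\overline{A}(v)$. $U_c(M,N)$ is the group of $g\in\mathrm{Aut}(T)$ with $gV_X=V_X$ and $c|_{A(gv)}\circ g|_{A(v)}\circ(c|_{A(v)})^{-1}$ in $M$ for $v\in V_X$ and in $N$ for $v\in V_Y$. Property (P): let $G$ act on a tree $T$. For a non-empty (finite or infinite) path $\mathcal{P}$ in $T$, let $\pi_{\mathcal{P}}(v)$ be the unique vertex of $\mathcal{P}$ closest to $v$; for $q\in V\mathcal{P}$, $\pi_{\mathcal{P}}^{-1}(q)$ spans a subtree invariant under the pointwise stabiliser $G_{(\mathcal{P})}$, and $G^q_{(\mathcal{P})}$ denotes the permutation group induced by $G_{(\mathcal{P})}$ on $\pi^{-1}_{\mathcal{P}}(q)$. $G$ has property (P) if, for every such path $\mathcal{P}$, the natural homomorphism $G_{(\mathcal{P})}\to\prod_{q\in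 V\mathcal{P}} G^q_{(\mathcal{P})}$ is an isomorphism. *)

(* Defs.v *)
From Stdlib Require Import ZArith List.
Open Scope Z_scope.

Section Defs.
Context {V : Type} (adj : V -> V -> Prop).

(* walks: u = x_0, x_1, ..., x_n = v with consecutive vertices adjacent;
   the list holds x_1 ... x_n *)
Fixpoint is_walk (u : V) (l : list V) (v : V) : Prop :=
  match l with
  | nil => u = v
  | x :: l' => adj u x /\ is_walk x l' v
  end.

Fixpoint reduced (u : V) (l : list V) : Prop :=
  match l with
  | x :: ((y :: _) as l') => u <> y /\ reduced x l'
  | _ => True
  end.

(* a tree (Serre): simple graph in which any two vertices are joined by a
   unique reduced walk (i.e. connected and without cycles) *)
Definition is_tree : Prop :=
  (forall u v, adj u v -> adj v u) /\
  (forall u, ~ adj u u) /\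
  (forall u v, exists l, is_walk u l v /\ reduced u l /\
     forall l', is_walk u l' v -> reduced u l' -> l' = l).

Definition dist (u v : V) (n : nat) : Prop :=
  exists l, is_walk u l v /\ length l = n /\
    forall l', is_walk u l' v -> (n <= length l')%nat.

Definition is_aut (g : V -> V) : Prop :=
  (forall u v, g u = g v -> u = v) /\ (forall v, exists u, g u = v) /\
  (forall u v, adj u v <-> adj (g u) (g v)).

(* a non-empty (finite, one-way infinite or bi-infinite) path, given as an
   injective map p from a non-empty interval I of Z with consecutive vertices
   adjacent *)
Definition is_path (I : Z -> Prop) (p : Z -> V) : Prop :=
  (exists i, I i) /\
  (forall a b c, I a -> I c -> a <= b <= c -> I b) /\
  (forall i j, I i -> I j -> p i = p j -> i = j) /\
  (forall i, I i -> I (i + 1) -> adj (p i) (p (i + 1))).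

Definition in_path (I : Z -> Prop) (p : Z -> V) (v : V) : Prop :=
  exists i, I i /\ p i = v.

(* proj I p v q : q = pi_P(v), the unique vertex of P closest to v *)
Definition proj (I : Z -> Prop) (p : Z -> V) (v q : V) : Prop :=
  in_path I p q /\
  forall q', in_path I p q' -> q' <> q ->
    exists n m, dist v q n /\ dist v q' m /\ (n < m)%nat.

Definition fix_path (G : (V -> V) -> Prop) (I : Z -> Prop) (p : Z -> V)
  (g : V -> V) : Prop :=
  G g /\ forall q, in_path I p q -> g q = q.

(* Tits' property (P) for a group G <= Aut(T) (given as a set of
   automorphisms): the natural homomorphism
   G_(P) -> prod_{q in VP} G^q_(P), g |-> (g restricted to pi^{-1}(q))_q,
   is bijective, for every non-empty path P.  An element of the product is a
   family (h q)_q where h q is a map on pi^{-1}(q) that is the restriction of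
   some element of G_(P). *)
Definition propertyP (G : (V -> V) -> Prop) : Prop :=
  forall (I : Z -> Prop) (p : Z -> V), is_path I p ->
  (forall g g', fix_path G I p g -> fix_path G I p g' ->
     (forall q v, in_path I p q -> proj I p v q -> g v = g' v) ->
     forall v, g v = g' v) /\
  (forall h : V -> V -> V,
     (forall q, in_path I p q -> exists g, fix_path G I p g /\
        forall v, proj I p v q -> h q v = g v) ->
     exists g, fix_path G I p g /\
       forall q v, in_path I p q -> proj I p v q -> g v = h q v).

Section Colouring.
Context {X Y : Type} (VX : V -> Prop).

(* natural bipartition V = V_X |_| V_Y, with V_Y the complement of V_X *)
Definition is_bipartition : Prop :=
  forall u v, adj u v -> (VX u <-> ~ VX v).

Definition is_biregular : Prop :=
  (forall v, VX v -> exists f : X -> V,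
     (forall x x', f x = f x' -> x = x') /\ (forall x, adj v (f x)) /\
     (forall w, adj v w -> exists x, f x = w)) /\
  (forall v, ~ VX v -> exists f : Y -> V,
     (forall y y', f y = f y' -> y = y') /\ (forall y, adj v (f y)) /\
     (forall w, adj v w -> exists y, f y = w)).

(* legal colouring c : AT -> X u Y (the disjoint union is X + Y); c u v is
   the colour of the arc (u,v) and is only relevant when adj u v *)
Definition legal_colouring (c : V -> V -> X + Y) : Prop :=
  (forall v, VX v ->
     (forall w, adj v w -> exists x, c v w = inl x) /\
     (forall w w', adj v w -> adj v w' -> c v w = c v w' -> w = w') /\
     (forall x, exists w, adj v w /\ c v w = inl x)) /\
  (forall v, ~ VX v ->
     (forall w, adj v w -> exists y, c v w = inr y) /\
     (forall w w', adj v w -> adj v w' -> c v w = c v w' -> w = w') /\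
     (forall y, exists w, adj v w /\ c v w = inr y)) /\
  (forall v w w', adj w v -> adj w' v -> c w v = c w' v).

(* U_c(M,N): g in Aut(T), g V_X = V_X, and the local action
   c|_{A(gv)} o g|_{A(v)} o (c|_{A(v)})^{-1} lies in M (resp. N) *)
Definition U_c (c : V -> V -> X + Y) (M : (X -> X) -> Prop)
  (N : (Y -> Y) -> Prop) (g : V -> V) : Prop :=
  is_aut g /\
  (forall v, VX v -> VX (g v)) /\ (forall v, VX v -> exists u, VX u /\ g u = v) /\
  (forall v, VX v -> exists m, M m /\
     forall w x, adj v w -> c v w = inl x -> c (g v) (g w) = inl (m x)) /\
  (forall v, ~ VX v -> exists n, N n /\
     forall w y, adj v w -> c v w = inr y -> c (g v) (g w) = inr (n y)).

End Colouring.
End Defs.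

Definition is_perm_group {S : Type} (M : (S -> S) -> Prop) : Prop :=
  (forall m, M m -> (forall a b, m a = m b -> a = b) /\ (forall b, exists a, m a = b)) /\
  M (fun a => a) /\
  (forall m m', M m -> M m' -> M (fun a => m (m' a))) /\
  (forall m, M m -> exists m', M m' /\ (forall a, m' (m a) = a) /\ (forall a, m (m' a) = a)).

(* Main.v *)
Require Import Defs.
From Stdlib Require Import ZArith List Lia Classical ClassicalEpsilon.
Import ListNotations.

Fixpoint offp {V : Type} (P : V -> Prop) (v : V) (l : list V) : Prop :=
  match l with nil => True | x :: l' => ~ P v /\ offp P x l' end.

Fixpoint penult {V : Type} (u : V) (l : list V) : option V :=
  match l with
  | nil => None
  | x :: l' => match l' with nil => Some u | _ => penult x l' end
  end.

Lemma reduced_tail {V} (x y : V) l : reduced x (y :: l) -> reduced y l.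
Proof. destruct l; simpl; tauto. Qed.

Lemma walk_app {V} (adj : V -> V -> Prop) l : forall u z y,
  is_walk adj u l z -> adj z y -> is_walk adj u (l ++ [y]) y.
Proof.
  induction l as [|x l IH]; simpl; intros u z y H1 H2.
  - subst; auto.
  - destruct H1; split; eauto.
Qed.

Lemma penult_snoc {V} (adj : V -> V -> Prop) l : forall u z y,
  is_walk adj u l z -> penult u (l ++ [y]) = Some z.
Proof.
  induction l as [|x l IH]; simpl; intros u z y H.
  - subst; auto.
  - destruct H as [_ H]. destruct l as [|w l'].
    + simpl in *. subst; auto.
    + specialize (IH x z y H). simpl in IH |- *. exact IH.
Qed.

Lemma reduced_snoc {V} l : forall (u y : V), reduced u l ->
  (forall a, penult u l = Some a -> a <> y) -> reduced u (l ++ [y]).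
Proof.
  induction l as [|x l IH]; intros u y H1 H2.
  - simpl; auto.
  - destruct l as [|w l'].
    + simpl. split; auto.
    + simpl in H1 |- *. destruct H1 as [H1 H3]. split; auto.
      apply (IH x y H3). intros a Ha. apply H2. simpl. exact Ha.
Qed.

Lemma offp_penult {V} (P : V -> Prop) l : forall u a,
  offp P u l -> penult u l = Some a -> ~ P a.
Proof.
  induction l as [|x l IH]; simpl; intros u a H1 H2.
  - discriminate.
  - destruct l as [|w l'].
    + inversion H2; subst. tauto.
    + destruct H1. eapply IH; eauto.
Qed.

Lemma reduce_walk {V} (adj : V -> V -> Prop) l : forall u v,
  is_walk adj u l v -> exists l2, is_walk adj u l2 v /\ reduced u l2 /\ (length l2 <= length l)%nat.
Proof.
  induction l as [|x l IH]; intros u v H.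
  - exists nil; simpl in *; auto.
  - destruct H as [Hux Hw]. destruct (IH _ _ Hw) as [l2 [W2 [R2 L2]]].
    destruct l2 as [|y l3].
    + exists [x]. simpl in *. repeat split; auto. lia.
    + destruct (classic (y = u)) as [E|E].
      * subst y. exists l3. destruct W2 as [_ W3]. split; auto. split.
        -- eapply reduced_tail; eauto.
        -- simpl in *. lia.
      * exists (x :: y :: l3). simpl in *. destruct W2. repeat split; auto; lia.
Qed.

Lemma uniq_red {V} (adj : V -> V -> Prop) (hT : is_tree adj) u v l1 l2 :
  is_walk adj u l1 v -> reduced u l1 -> is_walk adj u l2 v -> reduced u l2 -> l1 = l2.
Proof.
  intros. destruct hT as [_ [_ HT]]. destruct (HT u v) as [l [_ [_ Hu]]].
  rewrite (Hu l1), (Hu l2); auto.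
Qed.

Lemma geo {V} (adj : V -> V -> Prop) (hT : is_tree adj) u v l :
  is_walk adj u l v -> reduced u l -> dist adj u v (length l).
Proof.
  intros W R. exists l. repeat split; auto. intros l' W'.
  destruct (reduce_walk adj l' u v W') as [l2 [W2 [R2 L2]]].
  rewrite (uniq_red adj hT u v l l2); auto.
Qed.

Lemma dist_fun {V} (adj : V -> V -> Prop) u v n m :
  dist adj u v n -> dist adj u v m -> n = m.
Proof.
  intros [l1 [W1 [L1 H1]]] [l2 [W2 [L2 H2]]].
  specialize (H1 _ W2). specialize (H2 _ W1). lia.
Qed.
Open Scope Z_scope.

Lemma seg {V} (adj : V -> V -> Prop) (hT : is_tree adj) I p (hP : is_path adj I p)
  (s : Z) i u l : (s = 1 \/ s = -1) -> is_walk adj u l (p i) -> reduced u l ->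
  forall n : nat,
  ((1 <= n)%nat -> forall a, penult u l = Some a -> a <> p (i + s)) ->
  (forall k : nat, (k <= n)%nat -> I (i + s * Z.of_nat k)) ->
  exists sg, is_walk adj u (l ++ sg) (p (i + s * Z.of_nat n)) /\ reduced u (l ++ sg)
    /\ length sg = n /\ Forall (in_path I p) sg /\
    ((1 <= n)%nat -> penult u (l ++ sg) = Some (p (i + s * Z.of_nat (n-1)))).
Proof.
  intros Hs W R n. destruct hP as [_ [_ [Pinj Padj]]].
  destruct hT as [Hsym _].
  induction n as [|n IH]; intros Hpen HI.
  - exists nil. rewrite app_nil_r. replace (i + s * Z.of_nat 0) with i by lia.
    repeat split; auto. lia.
  - destruct IH as [sg [W1 [R1 [L1 [F1 P1]]]]].
    repeat split; auto; try (intros; lia).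
    + intros k Hk. apply HI. lia.
    + exists (sg ++ [p (i + s * Z.of_nat (S n))]).
      assert (Hn := HI n ltac:(lia)). assert (HSn := HI (S n) ltac:(lia)).
      rewrite app_assoc. repeat split.
      * eapply walk_app; eauto. destruct Hs; subst s.
        -- replace (i + 1 * Z.of_nat (S n)) with (i + 1 * Z.of_nat n + 1) by lia.
           apply Padj; auto. replace (i + 1 * Z.of_nat n + 1) with (i + 1 * Z.of_nat (S n)) by lia. auto.
        -- apply Hsym.
           replace (i + -1 * Z.of_nat n) with (i + -1 * Z.of_nat (S n) + 1) by lia.
           apply Padj; auto. replace (i + -1 * Z.of_nat (S n) + 1) with (i + -1 * Z.of_nat n) by lia. auto.
      * apply reduced_snoc; auto. intros a Ha.
        destruct n as [|n'].
        -- destruct sg; simpl in L1; try lia. rewrite app_nil_r in Ha.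
           replace (i + s * Z.of_nat 1) with (i + s) by lia. apply Hpen; auto.
        -- rewrite P1 in Ha by lia. inversion Ha; subst a. intro E.
           apply Pinj in E; [lia| apply HI; lia | auto].
      * rewrite length_app. simpl. lia.
      * apply Forall_app. split; auto. constructor; auto. eexists; eauto.
      * intros _. replace (S n - 1)%nat with n by lia. eapply penult_snoc; eauto.
Qed.

Lemma seg_between {V} (adj : V -> V -> Prop) (hT : is_tree adj) I p (hP : is_path adj I p)
  i j u l : I i -> I j -> is_walk adj u l (p i) -> reduced u l ->
  (forall a, penult u l = Some a -> ~ in_path I p a) ->
  exists sg, is_walk adj u (l ++ sg) (p j) /\ reduced u (l ++ sg)
    /\ length sg = Z.to_nat (Z.abs (j - i)) /\ Forall (in_path I p) sg.
Proof.
  intros Ii Ij W R Hpen.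
  assert (Hconv := proj1 (proj2 hP)).
  set (s := if Z.leb i j then 1 else -1).
  assert (Hs : s = 1 \/ s = -1) by (unfold s; destruct (Z.leb i j); auto).
  assert (HI : forall k : nat, (k <= Z.to_nat (Z.abs (j - i)))%nat -> I (i + s * Z.of_nat k)).
  { intros k Hk. unfold s in *. destruct (Z.leb_spec i j).
    - apply (Hconv i _ j); auto; lia.
    - apply (Hconv j _ i); auto; lia. }
  destruct (seg adj hT I p hP s i u l Hs W R (Z.to_nat (Z.abs (j - i)))) as [sg [W1 [R1 [L1 [F1 _]]]]].
  - intros H1 a Ha E. apply (Hpen a Ha). subst a. exists (i + s). split; auto.
    replace (i + s) with (i + s * Z.of_nat 1) by lia. apply HI. auto.
  - exact HI.
  - exists sg. replace (p j) with (p (i + s * Z.of_nat (Z.to_nat (Z.abs (j - i))))). auto.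
    f_equal. unfold s; destruct (Z.leb_spec i j); lia.
Qed.

Definition good {V} (adj : V -> V -> Prop) I p (v q : V) l :=
  is_walk adj v l q /\ reduced v l /\ offp (in_path I p) v l /\ in_path I p q.

Lemma cut {V} (adj : V -> V -> Prop) I p l : forall v z,
  is_walk adj v l z -> in_path I p z -> reduced v l ->
  exists q l0, good adj I p v q l0 /\ exists l1, l = l0 ++ l1.
Proof.
  induction l as [|x l IH]; intros v z W Hz R.
  - simpl in W; subst. exists z, nil. split. repeat split; simpl; auto. exists nil; auto.
  - destruct (classic (in_path I p v)) as [Hv|Hv].
    + exists v, nil. split. repeat split; simpl; auto. exists (x :: l); auto.
    + destruct W as [Hvx W].
      destruct (IH x z W Hz (reduced_tail _ _ _ R)) as [q [l0 [[W0 [R0 [O0 Q0]]] [l1 E]]]].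
      exists q, (x :: l0). split.
      * repeat split; simpl; auto.
        destruct l0 as [|y l0']; auto. simpl in E. subst l. simpl in R. tauto.
      * exists l1. subst; auto.
Qed.

Lemma good_exists {V} (adj : V -> V -> Prop) (hT : is_tree adj) I p (hP : is_path adj I p) v :
  exists q l, good adj I p v q l.
Proof.
  destruct hP as [[i0 Hi0] _]. destruct hT as [_ [_ HT]].
  destruct (HT v (p i0)) as [l [W [R _]]].
  destruct (cut adj I p l v (p i0) W ltac:(exists i0; auto) R) as [q [l0 [G _]]].
  eauto.
Qed.

Lemma good_proj {V} (adj : V -> V -> Prop) (hT : is_tree adj) I p (hP : is_path adj I p) v q l :
  good adj I p v q l -> proj adj I p v q.
Proof.
  intros [W [R [O Q]]]. split; auto.
  intros q' [j [Ij Ej]] Hne. destruct Q as [i [Ii Ei]]. subst q q'.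
  destruct (seg_between adj hT I p hP i j v l Ii Ij W R) as [sg [W1 [R1 [L1 _]]]].
  { intros a Ha. eapply offp_penult; eauto. }
  exists (length l), (length (l ++ sg)). split; [|split].
  - apply geo; auto.
  - apply geo; auto.
  - rewrite length_app, L1. assert (i <> j) by (intro; subst; auto). lia.
Qed.

Lemma proj_uniq {V} (adj : V -> V -> Prop) I p v q q' :
  proj adj I p v q -> proj adj I p v q' -> q = q'.
Proof.
  intros [Hq H1] [Hq' H2]. destruct (classic (q = q')) as [E|E]; auto.
  destruct (H1 q' Hq' (fun e => E (eq_sym e))) as [n [m [D1 [D2 L]]]].
  destruct (H2 q Hq E) as [n' [m' [D3 [D4 L']]]].
  pose proof (dist_fun adj _ _ _ _ D1 D4). pose proof (dist_fun adj _ _ _ _ D2 D3). lia.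
Qed.

Lemma proj_good {V} (adj : V -> V -> Prop) (hT : is_tree adj) I p (hP : is_path adj I p) v q :
  proj adj I p v q -> exists l, good adj I p v q l.
Proof.
  intros H. destruct (good_exists adj hT I p hP v) as [q0 [l0 G]].
  rewrite <- (proj_uniq adj I p v q0 q); eauto. eapply good_proj; eauto.
Qed.

Lemma proj_exists {V} (adj : V -> V -> Prop) (hT : is_tree adj) I p (hP : is_path adj I p) v :
  exists q, proj adj I p v q.
Proof.
  destruct (good_exists adj hT I p hP v) as [q0 [l0 G]]. exists q0. eapply good_proj; eauto.
Qed.

Lemma proj_self {V} (adj : V -> V -> Prop) (hT : is_tree adj) I p (hP : is_path adj I p) v :
  in_path I p v -> proj adj I p v v.
Proof.
  intros H. apply (good_proj adj hT I p hP v v nil). repeat split; simpl; auto.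
Qed.

Lemma good_step {V} (adj : V -> V -> Prop) (hT : is_tree adj) I p (hP : is_path adj I p) v w q l :
  adj v w -> ~ in_path I p v -> good adj I p v q l -> exists l', good adj I p w q l'.
Proof.
  intros A Hv [W [R [O Q]]].
  destruct l as [|x l1].
  - simpl in W; subst; tauto.
  - destruct (classic (x = w)) as [E|E].
    + subst x. exists l1. destruct W as [_ W]. destruct O as [_ O].
      repeat split; auto. eapply reduced_tail; eauto.
    + assert (Hw : ~ in_path I p w).
      { intros [a [Ia Ea]]. destruct Q as [i [Ii Ei]].
        assert (Wn : is_walk adj (p a) nil (p a)) by (simpl; auto).
        destruct (seg_between adj hT I p hP a i (p a) nil Ia Ii Wn Logic.I) as [sg [W1 [R1 [_ F1]]]].
        { intros a0 Ha0. discriminate. }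
        simpl in W1, R1. rewrite Ei in W1.
        assert (W2 : is_walk adj (p a) (v :: x :: l1) q).
        { simpl. rewrite Ea. split; [apply (proj1 hT); auto | exact W]. }
        assert (R2 : reduced (p a) (v :: x :: l1)).
        { simpl. split; [congruence | exact R]. }
        pose proof (uniq_red adj hT _ _ _ _ W1 R1 W2 R2). subst sg.
        inversion F1; auto. }
      exists (v :: x :: l1). unfold good. split; [|split; [|split]].
      * split; [apply (proj1 hT); auto | exact W].
      * simpl. split; [congruence | exact R].
      * split; [exact Hw | exact O].
      * exact Q.
Qed.

Lemma good_aut {V} (adj : V -> V -> Prop) I p (g : V -> V) :
  is_aut adj g -> (forall q, in_path I p q -> g q = q) ->
  forall l v q, good adj I p v q l -> good adj I p (g v) q (map g l).
Proof.
  intros [Ginj [_ Gadj]] Gfix.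
  assert (Hw : forall l v z, is_walk adj v l z -> is_walk adj (g v) (map g l) (g z)).
  { induction l as [|x l IH]; simpl; intros v z H.
    - subst; auto.
    - destruct H as [H1 H2]. split. apply (proj1 (Gadj _ _)); auto. auto. }
  assert (Hr : forall l v, reduced v l -> reduced (g v) (map g l)).
  { induction l as [|x l IH]; intros v H; simpl; auto.
    destruct l as [|y l']; simpl in *; auto. destruct H as [H1 H2].
    split; [intro E; apply H1; apply Ginj; auto | apply (IH x H2)]. }
  assert (Ho : forall l v, offp (in_path I p) v l -> offp (in_path I p) (g v) (map g l)).
  { induction l as [|x l IH]; intros v H; simpl in *; auto.
    destruct H as [H1 H2]. split; auto.
    intros [j [Ij Ej]]. apply H1. exists j. split; auto.
    apply Ginj. rewrite Gfix; auto. exists j; auto. }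
  intros l v q [W [R [O Q]]]. repeat split; auto.
  assert (Wg := Hw l v q W). rewrite (Gfix q Q) in Wg. auto.
Qed.

Lemma proj_aut {V} (adj : V -> V -> Prop) (hT : is_tree adj) I p (hP : is_path adj I p) (g : V -> V) :
  is_aut adj g -> (forall q, in_path I p q -> g q = q) ->
  forall v q, proj adj I p v q -> proj adj I p (g v) q.
Proof.
  intros A F v q H. destruct (proj_good adj hT I p hP v q H) as [l G].
  eapply good_proj; eauto. eapply good_aut; eauto.
Qed.

Theorem theorem4p2
  (X Y : Type)
  (hX : exists x1 x2 : X, x1 <> x2) (hY : exists y1 y2 : Y, y1 <> y2)
  (M : (X -> X) -> Prop) (N : (Y -> Y) -> Prop)
  (hM : is_perm_group M) (hN : is_perm_group N)
  (V : Type) (adj : V -> V -> Prop) (VX : V -> Prop)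
  (hT : is_tree adj) (hbip : is_bipartition adj VX)
  (hreg : @is_biregular V adj X Y VX)
  (c : V -> V -> X + Y) (hc : legal_colouring adj VX c) :
  propertyP adj (U_c adj VX c M N).
Proof.
  intros I p hP. split.
  - intros g g' Hg Hg' H v.
    destruct (good_exists adj hT I p hP v) as [q [l G]].
    apply (H q v); [exact (proj2 (proj2 (proj2 G))) | eapply good_proj; eauto].
  - intros h Hh.
    set (G := U_c adj VX c M N).
    assert (E : forall q, exists g, in_path I p q -> fix_path G I p g /\
               forall v, proj adj I p v q -> h q v = g v).
    { intros q. destruct (classic (in_path I p q)) as [Hq|Hq].
      - destruct (Hh q Hq) as [g Hg]. exists g. auto.
      - exists (fun v => v). tauto. }
    set (gq := fun q => proj1_sig (constructive_indefinite_description _ (E q))).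
    assert (Hgq : forall q, in_path I p q -> fix_path G I p (gq q) /\
               forall v, proj adj I p v q -> h q v = gq q v).
    { intros q. exact (proj2_sig (constructive_indefinite_description _ (E q))). }
    set (pr := fun v => proj1_sig (constructive_indefinite_description _ (proj_exists adj hT I p hP v))).
    assert (Hpr : forall v, proj adj I p v (pr v)).
    { intros v. exact (proj2_sig (constructive_indefinite_description _ (proj_exists adj hT I p hP v))). }
    set (g := fun v => gq (pr v) v).
    assert (F1 : forall v q, proj adj I p v q -> g v = gq q v).
    { intros v q H. unfold g. rewrite (proj_uniq adj I p v (pr v) q); auto. }
    assert (Fin : forall q, proj adj I p q q -> in_path I p q) by (intros q H; exact (proj1 H)).
    assert (Faut : forall q, in_path I p q -> is_aut adj (gq q)).
    { intros q Hq. exact (proj1 (proj1 (proj1 (Hgq q Hq)))). }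
    assert (Ffix : forall q, in_path I p q -> forall r, in_path I p r -> gq q r = r).
    { intros q Hq. exact (proj2 (proj1 (Hgq q Hq))). }
    assert (Ffib : forall q v r, in_path I p q -> proj adj I p v r -> proj adj I p (gq q v) r).
    { intros q v r Hq H. eapply proj_aut; eauto. }
    assert (Finv : forall q v r, in_path I p q -> proj adj I p (gq q v) r -> proj adj I p v r).
    { intros q v r Hq H. destruct (proj_exists adj hT I p hP v) as [r0 H0].
      rewrite (proj_uniq adj I p (gq q v) r r0); auto. }
    assert (K : forall v q w, proj adj I p v q -> adj v w -> g w = gq q w).
    { intros v q w Hv A. destruct (classic (in_path I p v)) as [Iv|Iv].
      - assert (Eq : v = q) by (eapply proj_uniq; [apply proj_self|]; eauto). subst q.
        destruct (classic (in_path I p w)) as [Iw|Iw].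
        + rewrite (F1 w w (proj_self adj hT I p hP w Iw)).
          rewrite (Ffix w Iw w Iw), (Ffix v Iv w Iw). auto.
        + apply F1. destruct (proj_good adj hT I p hP w (pr w) (Hpr w)) as [l Gl].
          assert (A' : adj w v) by (apply (proj1 hT); auto).
          destruct (good_step adj hT I p hP w v (pr w) l A' Iw Gl) as [l' Gl'].
          assert (Ev : pr w = v).
          { eapply proj_uniq; [eapply good_proj; eauto| apply proj_self; auto]. }
          rewrite <- Ev. auto.
      - apply F1. destruct (proj_good adj hT I p hP v q Hv) as [l Gl].
        destruct (good_step adj hT I p hP v w q l A Iv Gl) as [l' Gl'].
        eapply good_proj; eauto. }
    assert (K0 : forall v q, proj adj I p v q -> g v = gq q v) by exact F1.
    assert (Ginj : forall u v, g u = g v -> u = v).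
    { intros u v Euv. assert (Iu := proj1 (Hpr u)).
      assert (Iv := proj1 (Hpr v)).
      assert (Eq : pr u = pr v).
      { eapply proj_uniq; [apply (Ffib (pr u) u (pr u) Iu (Hpr u)) |].
        fold (g u). rewrite Euv. apply (Ffib (pr v) v (pr v) Iv (Hpr v)). }
      unfold g in Euv. rewrite Eq in Euv. eapply (proj1 (Faut _ Iv)); eauto. }
    assert (Gfix : forall q, in_path I p q -> g q = q).
    { intros q Hq. rewrite (F1 q q (proj_self adj hT I p hP q Hq)). apply Ffix; auto. }
    assert (Gsurj : forall v q, proj adj I p v q -> exists u, g u = v).
    { intros v q H. assert (Iq := proj1 H).
      destruct (proj1 (proj2 (Faut q Iq)) v) as [u Eu].
      exists u. rewrite (F1 u q); auto. apply (Finv q u q Iq). rewrite Eu; auto. }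
    exists g. split; [split|].
    + unfold G, U_c. split; [|split; [|split; [|split]]].
      * split; [exact Ginj|split].
        -- intros v. exact (Gsurj v (pr v) (Hpr v)).
        -- intros u v. assert (Iq := proj1 (Hpr u)).
           destruct (Faut _ Iq) as [_ [Gs Ga]]. split.
           ++ intros A. rewrite (K0 u (pr u) (Hpr u)), (K u (pr u) v (Hpr u) A).
              apply (proj1 (Ga _ _)); auto.
           ++ intros A. rewrite (K0 u (pr u) (Hpr u)) in A.
              destruct (Gs (g v)) as [v' Ev']. rewrite <- Ev' in A.
              apply Ga in A. rewrite <- (K u (pr u) v' (Hpr u) A) in Ev'.
              apply Ginj in Ev'. subst v'. auto.
      * intros v Hv. assert (Iq := proj1 (Hpr v)). rewrite (K0 v _ (Hpr v)).
        destruct (proj1 (Hgq _ Iq)) as [[_ [HU _]] _]. auto.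
      * intros v Hv. assert (Iq := proj1 (Hpr v)).
        destruct (proj1 (Hgq _ Iq)) as [[_ [_ [HU _]]] _].
        destruct (HU v Hv) as [u [Hu Eu]]. exists u. split; auto.
        rewrite (F1 u (pr v)); auto. apply (Finv (pr v) u (pr v) Iq). rewrite Eu; auto.
      * intros v Hv. assert (Iq := proj1 (Hpr v)).
        destruct (proj1 (Hgq _ Iq)) as [[_ [_ [_ [HU _]]]] _].
        destruct (HU v Hv) as [m [Hm Pm]]. exists m. split; auto.
        intros w x A Cx. rewrite (K0 v _ (Hpr v)), (K v _ w (Hpr v) A). auto.
      * intros v Hv. assert (Iq := proj1 (Hpr v)).
        destruct (proj1 (Hgq _ Iq)) as [[_ [_ [_ [_ HU]]]] _].
        destruct (HU v Hv) as [m [Hm Pm]]. exists m. split; auto.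
        intros w x A Cx. rewrite (K0 v _ (Hpr v)), (K v _ w (Hpr v) A). auto.
    + exact Gfix.
    + intros q v Hq Hv. rewrite (F1 v q Hv). symmetry. apply (proj2 (Hgq q Hq)). auto.
Qed.
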